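(* Let $q$ be a query program, $P$ a partial model, $\mathcal{T}$ a theory, and $P',\mathcal{T}'$ the partial model and theory produced by the witness-generation construction. If $M=\langle O_M,I_M,\mathcal{S}_M\rangle\in\mathit{solutions}(P,\mathcal{T})$, then there exist a renaming of variables $\mathit{rename}:\mathcal{X}\to\mathcal{X}$ stationary with respect to $\mathcal{T}$ and a model $M'\in\mathit{solutions}(P',\mathcal{T}')$ such that $M^{\mathit{rename}}\succcurlyeq M'$ and $\mathit{DS}_M(M)=\mathit{DS}_M(M')=g_{\mathrm{witness}}(M')$, where $\mathit{DS}_M(N)=\max_{k\vDash\mathcal{S}_{\mathrm{IPET}}\cup\mathcal{S}_{\mathrm{flow}}(N)}g_{\mathrm{IPET}}(k)$ and $g_{\mathrm{witness}}(N)=\max_{k\vDash\mathcal{S}_N}g_{\mathrm{IPET}}(k)$ for concrete $N$.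
   Context: Linear systems. Fix a large finite reserve $\mathcal{X}$ of integer variables. A system of linear inequalities $\mathcal{S}$ is a finite set of inequalities $\sum_j a_{ij}x_j\le y_i$ (equations are written as pairs of inequalities). A valuation $k:\mathcal{X}\to\mathbb{Z}$ is a solution of $\mathcal{S}$ ($k\vDash\mathcal{S}$) if it satisfies all of them; $\mathcal{S}_1\vDash\mathcal{S}_2$ means every solution of $\mathcal{S}_1$ is a solution of $\mathcal{S}_2$. Models. A metamodel is a signature $\Sigma$ of unary class symbols, binary relation symbols, a unary existence symbol $\varepsilon$ and a binary equality symbol $\sim$. A (scoped) partial model $P=\langle O_P,I_P,\mathcal{S}_P\rangle$ consists of a finite object set $O_P$, a 3-valued interpretation $I_P(\sigma):O_P^{\mathrm{arity}(\sigma)}\to\{0,1,\tfrac12\}$ for each $\sigma\in\Sigma$ ($\tfrac12$ = unknown), and a scope $\mathcal{S}_P$ (a system of linear inequalities). $P$ is concrete if all values are $0$ or $1$, $I_P(\varepsilon)(o)=1$ for all $o$, $I_P(\sim)(o_1,o_2)=1$ iff $o_1=o_2$, and $\mathcal{S}_P$ has a solution. Refinement: for $\mathit{abs}:O_Q\to O_P$, $P\succcurlyeq_{\mathit{abs}}Q$ holds if for all $\sigma$ and tuples $\bar q$, $I_P(\sigma)(\mathit{abs}(\bar q))$ is $\tfrac12$ or equals $I_Q(\sigma)(\bar q)$; every $p$ with $I_P(\varepsilon)(p)=1$ has a preimage under $\mathit{abs}$; and $\mathcal{S}_Q\vDash\mathcal{S}_P$. $P\succcurlyeq Q$ if $P\succcurlyeq_{\mathit{abs}}Q$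 for some $\mathit{abs}$. For a first-order predicate $\varphi$ over $\Sigma$ with free variables $v_1,\dots,v_n$ and a concrete model $M$, $M\#\varphi$ is the number of maps $Z:\{v_1,\dots,v_n\}\to O_M$ under which $\varphi$ is true in $M$. A theory $\mathcal{T}=\langle\Phi,r\rangle$ is a finite set $\Phi$ of predicates with a map $r:\Phi\to\mathcal{X}$; a concrete $M$ is compatible with it ($M\vDash\mathcal{T}$) if $\mathcal{S}_M\vDash r(\varphi)=M\#\varphi$ for all $\varphi\in\Phi$. $\mathit{solutions}(P,\mathcal{T})$ is the set of concrete models $M$ with $P\succcurlyeq M$ and $M\vDash\mathcal{T}$. Renaming. A map $\mathit{rename}:\mathcal{X}\to\mathcal{X}$ is a renaming of variables if it is bijective; it is stationary with respect to $\mathcal{T}=\langle\Phi,r\rangle$ if $\mathit{rename}(r(\varphi))=r(\varphi)$ for all $\varphi\in\Phi$. For a partial model $P=\langle O_P,I_P,\mathcal{S}_P\rangle$, its renaming is $P^{\mathit{rename}}=\langle O_P,I_P,\mathcal{S}_P^{\mathit{rename}}\rangle$, where $\mathcal{S}_P^{\mathit{rename}}$ is obtained from $\mathcal{S}_P$ by replacing each variable $x$ with $\mathit{rename}(x)$. Program and IPET. $q$ is a query program generated from a graph-query search plan: structured code of nested for-loops and if-statements, where each for-loop implements an extend constraint ($C(v)$ with $v$ new, or $R(v_i,v_j)$ with $v_j$ new; it iterates over all candidate bindings of the new variable) and each if-statement implements a check constraint ($C(v_i)$, $R(v_i,v_j)$, $v_i=v_j$, or their negations, over bound variables). $\mathit{BB}$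 is its set of basic blocks; its weighted CFG is $\langle V,E,s,t,w,\mathit{tr}\rangle$ with edges $E\subseteq V\times V$, start/end $s,t$, weights $w:E\to\mathbb{N}$, traceability $\mathit{tr}:V\to\mathit{BB}$. $f:E\to\mathcal{X}$ assigns distinct variables to edges. $\mathcal{S}_{\mathrm{IPET}}$ contains $\sum_{e=\langle s,n\rangle}f(e)=1$, $\sum_{e=\langle n,t\rangle}f(e)=1$, flow conservation at every $n\ne s,t$, $-f(e)\le0$, and possibly further low-level flow facts. $g_{\mathrm{IPET}}(k)=\sum_{e\in E}w(e)k(f(e))$. Standing assumption (IPET safety): for every execution of $q$ along CFG path $\pi$, the valuation $k_\pi(f(e))=\pi\#e$ satisfies $\mathcal{S}_{\mathrm{IPET}}$ and the execution time is at most $g_{\mathrm{IPET}}(k_\pi)$. Basic block predicates. For $bb\in\mathit{BB}$, $\psi_{bb}$ is the conjunction of the atomic predicates of all for/if statements enclosing $bb$ (extend atoms without their existential quantifier; check literals as-is); $\psi_{bb}=\mathrm{true}$ if none. If $bb$ is the header of loop $\ell$, also $\psi'_{bb}=\psi_{bb}\wedge(\text{atom of }\ell)$. $\Psi$ is the set of all these predicates. By the structure of the generated code, in the run of $q$ on a concrete $M$, executions of a non-header $bb$ correspond one-to-one to matches of $\psi_{bb}$, and executions of a loop header $bb$ to matches of $\psi_{bb}$ plus matches of $\psi'_{bb}$. For concrete $M$, $\mathcal{S}_{\mathrm{flow}}(M)$ contains for each $bb$: $\sum_{e=\langle n_1,n_2\rangle\in E,\mathit{tr}(n_1)=bb}f(e)=M\#\psi_{bb}+M\#\psi'_{bb}$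 (loop header) or $=M\#\psi_{bb}$ (otherwise). Witness generation. Given $P=\langle O_P,I_P,\mathcal{S}_P\rangle$ and $\mathcal{T}=\langle\Phi,r\rangle$ (with the range of $f$ disjoint from the range of $r$ and from the variables of $\mathcal{S}_P$), extend $r$ to $r'$ on $\Phi\cup\Psi$ by assigning to each $\psi\in\Psi$ a fresh distinct variable (not in the range of $f$, of $r$, or in $\mathcal{S}_P$). $\mathcal{S}_{\mathrm{merge}}$ contains for each $bb$: $r'(\psi_{bb})+r'(\psi'_{bb})-\sum_{e=\langle n_1,n_2\rangle\in E,\mathit{tr}(n_1)=bb}f(e)=0$ if $bb$ is a loop header, else $r'(\psi_{bb})-\sum_{e=\langle n_1,n_2\rangle\in E,\mathit{tr}(n_1)=bb}f(e)=0$. Set $P'=\langle O_P,I_P,\mathcal{S}_P\cup\mathcal{S}_{\mathrm{IPET}}\cup\mathcal{S}_{\mathrm{merge}}\rangle$ and $\mathcal{T}'=\langle\Phi\cup\Psi,r'\rangle$. *)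

(* Defs.v *)
From HB Require Import structures.
From mathcomp Require Import all_boot all_order all_algebra.
From Stdlib Require List.
Unset Printing Implicit Defensive.
Import Order.TTheory GRing.Theory Num.Theory.
Local Open Scope ring_scope.

Definition Var := nat.
Definition valuation := Var -> int.

(* an inequality  sum_j a_j x_j <= y  : (list of (a_j, x_j), y) *)
Definition ineq := (seq (int * Var) * int)%type.
Definition system := seq ineq.

Definition lhs (k : valuation) (ts : seq (int * Var)) : int :=
  \sum_(t <- ts) t.1 * k t.2.

Definition sat_ineq (k : valuation) (c : ineq) : Prop := lhs k c.1 <= c.2.
Definition sat (k : valuation) (S : system) : Prop :=
  forall c, c \in S -> sat_ineq k c.
Definition entails (S1 S2 : system) : Prop :=
  forall k, sat k S1 -> sat k S2.
Definition solvable (S : system) : Prop := exists k, sat k S.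

Definition negterms (ts : seq (int * Var)) : seq (int * Var) :=
  [seq (- t.1, t.2) | t <- ts].
Definition eqn (ts : seq (int * Var)) (c : int) : system :=
  [:: (ts, c); (negterms ts, - c)].

Definition ineq_vars (c : ineq) : seq Var := [seq t.2 | t <- c.1].
Definition sys_vars (S : system) : seq Var := flatten [seq ineq_vars c | c <- S].

Definition rename_sys (rn : Var -> Var) (S : system) : system :=
  [seq ([seq (t.1, rn t.2) | t <- c.1], c.2) | c <- S].

Definition is_max (S : system) (g : valuation -> int) (v : int) : Prop :=
  (exists k, sat k S /\ g k = v) /\ (forall k, sat k S -> g k <= v).

Inductive V3 := V0 | V1 | Vhalf.   (* 0, 1, 1/2 (unknown) *)

Definition isV1 (x : V3) : bool := if x is V1 then true else false.

Section Models.
(* signature: class symbols C (unary), relation symbols R (binary);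
   the existence symbol eps and equality symbol ~ are built in *)
Context {C R : Type}.

Record pmodel := PModel {
  obj  : finType;
  Icls : C -> obj -> V3;
  Irel : R -> obj -> obj -> V3;
  Iex  : obj -> V3;
  Ieq  : obj -> obj -> V3;
  scope : system
}.

Definition info_le (a b : V3) : Prop := a = Vhalf \/ a = b.

Definition refines_by (P Q : pmodel) (abs : obj Q -> obj P) : Prop :=
  [/\ (forall c q, info_le (Icls P c (abs q)) (Icls Q c q)),
      (forall r q1 q2, info_le (Irel P r (abs q1) (abs q2)) (Irel Q r q1 q2)),
      (forall q, info_le (Iex P (abs q)) (Iex Q q)),
      (forall q1 q2, info_le (Ieq P (abs q1) (abs q2)) (Ieq Q q1 q2)) &
      (forall p, Iex P p = V1 -> exists q, abs q = p)]
  /\ entails (scope Q) (scope P).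

Definition refines (P Q : pmodel) : Prop := exists abs, refines_by P Q abs.

Definition concrete (P : pmodel) : Prop :=
  [/\ (forall c o, Icls P c o <> Vhalf),
      (forall r o1 o2, Irel P r o1 o2 <> Vhalf),
      (forall o, Iex P o = V1),
      (forall o1 o2, Ieq P o1 o2 = (if o1 == o2 then V1 else V0)) &
      solvable (scope P)].

Inductive form :=
  | FTrue
  | FCls of C & nat
  | FRel of R & nat & nat
  | FEx of nat
  | FEq of nat & nat
  | FNot of form
  | FAnd of form & form
  | FOr of form & form
  | FExists of nat & form
  | FForall of nat & form.

(* a predicate with free variables v_0, ..., v_(nvars-1) *)
Record pred_fo := Pred { nvars : nat; body : form }.

Definition upd {T : Type} (e : nat -> option T) (v : nat) (o : T) :=
  fun i => if i == v then Some o else e i.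

(* truth of a formula in (the concrete reading of) a model *)
Fixpoint eval {M : pmodel} (e : nat -> option (obj M)) (phi : form) : bool :=
  match phi with
  | FTrue => true
  | FCls c v => if e v is Some o then isV1 (Icls M c o) else false
  | FRel r v w => if e v is Some o1 then if e w is Some o2
                  then isV1 (Irel M r o1 o2) else false else false
  | FEx v => if e v is Some o then isV1 (Iex M o) else false
  | FEq v w => if e v is Some o1 then if e w is Some o2
               then isV1 (Ieq M o1 o2) else false else false
  | FNot p => ~~ eval e p
  | FAnd p q => eval e p && eval e q
  | FOr p q => eval e p || eval e q
  | FExists v p => [exists o : obj M, eval (upd e v o) p]
  | FForall v p => [forall o : obj M, eval (upd e v o) p]
  end.

Definition env_of {M : pmodel} {n : nat} (Z : {ffun 'I_n -> obj M})
  : nat -> option (obj M) := fun i => omap Z (insub i).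

Definition count (M : pmodel) (phi : pred_fo) : nat :=
  #|[set Z : {ffun 'I_(nvars phi) -> obj M} | eval (env_of Z) (body phi)]|.

(* theories: a finite family of predicates with their variables r(phi) *)
Definition theory := seq (pred_fo * Var).
Definition theory_vars (T : theory) : seq Var := [seq x.2 | x <- T].

Definition compatible (M : pmodel) (T : theory) : Prop :=
  forall x, List.In x T ->
    entails (scope M) (eqn [:: (1, x.2)] (count M x.1)%:Z).

Definition solution (P : pmodel) (T : theory) (M : pmodel) : Prop :=
  [/\ concrete M, refines P M & compatible M T].

Definition renaming (rn : Var -> Var) : Prop := bijective rn.
Definition stationary (rn : Var -> Var) (T : theory) : Prop :=
  forall x, List.In x T -> rn x.2 = x.2.
Definition rename_model (P : pmodel) (rn : Var -> Var) : pmodel :=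
  @PModel (obj P) (Icls P) (Irel P) (Iex P) (Ieq P) (rename_sys rn (scope P)).

Definition with_scope (P : pmodel) (S : system) : pmodel :=
  @PModel (obj P) (Icls P) (Irel P) (Iex P) (Ieq P) S.

Section IPET.
Context {BB V : finType}.
Variables (header : pred BB)
          (psi psi' : BB -> pred_fo).
Variables (E : {set V * V}) (s t : V) (w : V * V -> nat) (tr : V -> BB)
          (f : V * V -> Var).

Definition esum (p : V * V -> bool) : seq (int * Var) :=
  [seq (1, f e) | e <- enum E & p e].

Definition IPET_base : system :=
  eqn (esum (fun e => e.1 == s)) 1 ++
  eqn (esum (fun e => e.2 == t)) 1 ++
  flatten [seq eqn (esum (fun e => e.2 == n) ++ negterms (esum (fun e => e.1 == n))) 0
          | n <- enum V & (n != s) && (n != t)] ++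
  [seq ([:: (-1, f e)], 0) | e <- enum E].

Definition g_IPET (k : valuation) : int := \sum_(e in E) (w e)%:Z * k (f e).

Definition out_bb (bb : BB) : seq (int * Var) := esum (fun e => tr e.1 == bb).

Definition bb_count (N : pmodel) (bb : BB) : nat :=
  if header bb then count N (psi bb) + count N (psi' bb) else count N (psi bb).

Definition S_flow (N : pmodel) : system :=
  flatten [seq eqn (out_bb bb) (bb_count N bb)%:Z | bb <- enum BB].

Definition k_path (pi : seq (V * V)) : valuation :=
  fun x => (count_mem true [seq (e \in E) && (f e == x) | e <- pi])%:Z.

Variables (rpsi rpsi' : BB -> Var).

Definition S_merge : system :=
  flatten [seq (if header bb
                then eqn ((1, rpsi bb) :: (1, rpsi' bb) :: negterms (out_bb bb)) 0
                else eqn ((1, rpsi bb) :: negterms (out_bb bb)) 0)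
          | bb <- enum BB].

Definition theory' (T : theory) : theory :=
  T ++ [seq (psi bb, rpsi bb) | bb <- enum BB]
    ++ [seq (psi' bb, rpsi' bb) | bb <- enum BB & header bb].

Definition model' (S_IPET : system) (P : pmodel) : pmodel :=
  with_scope P (scope P ++ S_IPET ++ S_merge).

End IPET.
End Models.

(* Main.v *)
Require Import Defs.
From HB Require Import structures.
From mathcomp Require Import all_boot all_order all_algebra.
From mathcomp Require Import zify.
From Stdlib Require Import Classical.
From Stdlib Require List.
Import Order.TTheory GRing.Theory Num.Theory.
Local Open Scope ring_scope.

Lemma lhs_cons k t ts : lhs k (t :: ts) = t.1 * k t.2 + lhs k ts.
Proof. by rewrite /lhs big_cons. Qed.
Lemma lhs_nil k : lhs k [::] = 0. Proof. by rewrite /lhs big_nil. Qed.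
Lemma lhs_cat k ts1 ts2 : lhs k (ts1 ++ ts2) = lhs k ts1 + lhs k ts2.
Proof. by rewrite /lhs big_cat. Qed.
Lemma lhs_neg k ts : lhs k (negterms ts) = - lhs k ts.
Proof. rewrite /lhs /negterms big_map -sumrN; apply: eq_bigr => t _; by rewrite mulNr. Qed.
Lemma lhs_ext k1 k2 ts : {in [seq t.2 | t <- ts], k1 =1 k2} -> lhs k1 ts = lhs k2 ts.
Proof. move=> H; rewrite /lhs big_seq [RHS]big_seq; apply: eq_bigr => t Ht; by rewrite H // map_f. Qed.

Lemma sat_eqn k ts c : sat k (Defs.eqn ts c) <-> lhs k ts = c.
Proof.
split.
- move=> H. have H1 := H _ (mem_head _ _).
  have H2 : sat_ineq k (negterms ts, -c) by apply: H; rewrite !inE eqxx orbT.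
  rewrite /sat_ineq /= lhs_neg lerN2 in H2. rewrite /sat_ineq /= in H1.
  by apply/eqP; rewrite eq_le H1 H2.
- move=> <- c0; rewrite !inE => /orP[] /eqP -> ; rewrite /sat_ineq /= ?lhs_neg //.
Qed.

Lemma sat_cat k S1 S2 : sat k (S1 ++ S2) <-> sat k S1 /\ sat k S2.
Proof. split.
- move=> H; split=> c Hc; apply: H; by rewrite mem_cat Hc ?orbT.
- move=> [H1 H2] c; rewrite mem_cat => /orP[]; [exact: H1|exact: H2]. Qed.

Lemma sat_flatten {X : eqType} k (F : X -> system) s :
  sat k (flatten [seq F x | x <- s]) <-> forall x, x \in s -> sat k (F x).
Proof. split.
- move=> H x Hx c Hc; apply: H; apply/flattenP; exists (F x) => //; exact: map_f.
- move=> H c /flattenP [S' /mapP [x Hx ->] Hc]; exact: H x Hx c Hc.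
Qed.

Lemma sat_sub k S1 S2 : {subset S1 <= S2} -> sat k S2 -> sat k S1.
Proof. by move=> H Hs c Hc; apply: Hs; apply: H. Qed.

Lemma sat_ext k1 k2 S : {in sys_vars S, k1 =1 k2} -> sat k1 S -> sat k2 S.
Proof. move=> H Hs c Hc; have := Hs c Hc; rewrite /sat_ineq (@lhs_ext k1 k2) // => x Hx; apply: H.
apply/flattenP; exists (ineq_vars c) => //; exact: map_f. Qed.

Lemma sat_rename k rn S : sat k (rename_sys rn S) <-> sat (k \o rn) S.
Proof.
have E c : lhs k [seq (t.1, rn t.2) | t <- c.1] = lhs (k \o rn) c.1 by rewrite /lhs big_map.
rewrite /rename_sys; split.
- move=> H c Hc; have := H _ (map_f (fun c : ineq => ([seq (t.1, rn t.2) | t <- c.1], c.2)) Hc).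
  by rewrite /sat_ineq /= E.
- move=> H c /mapP [c0 Hc0 ->]; rewrite /sat_ineq /= E; exact: H.
Qed.

Lemma int_max (Q : int -> Prop) (B v0 : int) : Q v0 -> (forall v, Q v -> v <= B) ->
  exists m, Q m /\ forall v, Q v -> v <= m.
Proof.
move=> Q0 HB.
suff: forall d : nat, forall v0, Q v0 -> B - v0 <= d%:Z -> exists m, Q m /\ forall v, Q v -> v <= m.
  move=> /(_ `|B - v0|%N v0 Q0); apply. rewrite abszE; exact: ler_norm.
elim=> [|d IH] v1 Q1 Hd.
- exists v1; split=> // v Qv; have := HB v Qv; lia.
- case: (classic (exists v, Q v /\ v1 < v)) => [[v [Qv Hv]]|Hn].
  + apply: (IH v Qv); lia.
  + exists v1; split=> // v Qv; case: (lerP v v1) => // Hlt; exfalso; apply: Hn; by exists v.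
Qed.

Lemma lhs_esum {V : finType} (E : {set V * V}) f (p : pred (V * V)) (k : valuation) :
  lhs k (esum E f p) = \sum_(e <- enum E | p e) k (f e).
Proof. by rewrite /lhs /esum big_map big_filter; apply: eq_bigr => e _; rewrite mul1r. Qed.

Lemma le_lhs_esum {V : finType} (E : {set V * V}) f (p : pred (V * V)) (k : valuation) e0 :
  (forall e, e \in E -> 0 <= k (f e)) -> e0 \in E -> p e0 -> k (f e0) <= lhs k (esum E f p).
Proof.
move=> Hn He0 Hp; rewrite lhs_esum -big_filter (bigD1_seq e0) /=.
- rewrite lerDl big_seq_cond; apply: sumr_ge0 => e /andP [He _]; apply: Hn.
  by move: He; rewrite mem_filter mem_enum => /andP [_ ->].
- by rewrite mem_filter Hp mem_enum.
- by apply: filter_uniq; exact: enum_uniq.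
Qed.

Lemma le_foldr_max (s : seq nat) x : x \in s -> (x <= foldr maxn 0 s)%N.
Proof. elim: s => //= a s IH; rewrite inE => /orP[/eqP->|/IH]; lia. Qed.

Lemma exists_swap (A L : seq nat) : exists rn : nat -> nat,
  [/\ cancel rn rn, (forall x, x \in L -> x \notin A -> rn x = x) &
      (forall x, x \in L -> rn x \notin A)].
Proof.
set A' := undup A.
set N := (foldr maxn 0 (A ++ L)).+1.
have ltN : forall x, x \in A ++ L -> (x < N)%N by move=> x /le_foldr_max.
have ltA : forall x, x \in A -> (x < N)%N by move=> x Hx; apply: ltN; rewrite mem_cat Hx.
have ltL : forall x, x \in L -> (x < N)%N by move=> x Hx; apply: ltN; rewrite mem_cat Hx orbT.
have uA : uniq A' by apply: undup_uniq.
pose rn x := if x \in A' then (N + index x A')%N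
  else if (N <= x)%N && (x < N + size A')%N then nth 0%N A' (x - N) else x.
have notA : forall y, (N <= y)%N -> y \notin A'.
  by move=> y Hy; apply/negP; rewrite mem_undup => /ltA; lia.
have inv : cancel rn rn.
  move=> x; rewrite /rn; case hA: (x \in A').
  - rewrite (negbTE (notA _ (leq_addr _ _))).
    have -> : (N <= N + index x A')%N && (N + index x A' < N + size A')%N.
      by rewrite leq_addr /= ltn_add2l index_mem.
    by rewrite addKn nth_index.
  - case hR: ((N <= x)%N && (x < N + size A')%N).
    + move/andP: hR => [h1 h2].
      have hy : nth 0%N A' (x - N) \in A' by apply: mem_nth; lia.
      by rewrite hy index_uniq //; [lia|lia].
    + by rewrite hA hR.
exists rn; split.
- exact: inv.
- move=> x HL HA; rewrite /rn mem_undup (negbTE HA).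
  by have := ltL x HL; case: ifP => //; lia.
- move=> x HL; rewrite /rn; case: ifP => hA.
  + by apply/negP => /ltA; lia.
  + have := ltL x HL; case: ifP; first lia.
    by move=> _ _; move: hA; rewrite mem_undup => ->.
Qed.
Lemma eval_ws {C R : Type} (M : @pmodel C R) S phi :
  forall e : nat -> option (obj M), @eval C R (with_scope M S) e phi = @eval C R M e phi.
Proof.
elim: phi => //=.
- by move=> p IH e; rewrite IH.
- by move=> p IHp q IHq e; rewrite IHp IHq.
- by move=> p IHp q IHq e; rewrite IHp IHq.
- by move=> v p IH e; apply: eq_existsb => o; rewrite IH.
- by move=> v p IH e; apply: eq_forallb => o; rewrite IH.
Qed.
Lemma count_ws {C R : Type} (M : @pmodel C R) S phi : Defs.count (with_scope M S) phi = Defs.count M phi.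
Proof. rewrite /Defs.count; apply: eq_card => Z; rewrite !inE; exact: eval_ws. Qed.
Lemma S_flow_ws {C R : Type} {BB V : finType} header psi psi' (E : {set V * V}) (tr : V -> BB) f (M : @pmodel C R) S :
  S_flow header psi psi' E tr f (with_scope M S) = S_flow header psi psi' E tr f M.
Proof. rewrite /S_flow /bb_count; congr flatten; apply: eq_map => bb; by rewrite !count_ws. Qed.

Lemma In_theory_vars {C R : Type} (T : @theory C R) x : List.In x T -> x.2 \in theory_vars T.
Proof. elim: T => //= a T IH [->|H]; first by rewrite inE eqxx. by rewrite inE (IH H) orbT. Qed.

Lemma In_mem {X : eqType} (s : seq X) x : List.In x s -> x \in s.
Proof. elim: s => //= a s IH [->|H]; first by rewrite inE eqxx. by rewrite inE (IH H) orbT. Qed.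

Lemma esum_vars {V : finType} (E : {set V * V}) f (p : pred (V * V)) x :
  x \in [seq t.2 | t <- esum E f p] -> x \in [seq f e | e in E].
Proof.
rewrite /esum -map_comp => /mapP [e He ->]; rewrite mem_filter mem_enum in He.
by case/andP: He => _ He; apply: image_f.
Qed.

Theorem lemmaA5
  (C R : Type) (BB V : finType)
  (header : pred BB) (psi psi' : BB -> @pred_fo C R)
  (E : {set V * V}) (s t : V) (w : V * V -> nat) (tr : V -> BB)
  (f : V * V -> Var) (S_IPET : system)
  (run : @pmodel C R -> seq (V * V))
  (P : @pmodel C R) (T : @theory C R) (rpsi rpsi' : BB -> Var)
  (M : @pmodel C R) :
  {in E &, injective f} ->
  {subset IPET_base E s t f <= S_IPET} ->
  {subset sys_vars S_IPET <= [seq f e | e in E]} ->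
  (forall N : @pmodel C R, concrete N ->
     sat (k_path E f (run N)) (S_IPET ++ S_flow header psi psi' E tr f N)) ->
  (forall e, e \in E -> f e \notin theory_vars T) ->
  (forall e, e \in E -> f e \notin sys_vars (scope P)) ->
  (forall bb, rpsi bb \notin [seq f e | e in E]) ->
  (forall bb, header bb -> rpsi' bb \notin [seq f e | e in E]) ->
  (forall bb, rpsi bb \notin theory_vars T) ->
  (forall bb, header bb -> rpsi' bb \notin theory_vars T) ->
  (forall bb, rpsi bb \notin sys_vars (scope P)) ->
  (forall bb, header bb -> rpsi' bb \notin sys_vars (scope P)) ->
  injective rpsi ->
  {in header &, injective rpsi'} ->
  (forall bb1 bb2, header bb2 -> rpsi bb1 <> rpsi' bb2) ->
  solution P T M ->
  exists rn : Var -> Var,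
    [/\ renaming rn, stationary rn T &
    exists M' : @pmodel C R,
      [/\ solution (model' header E tr f rpsi rpsi' S_IPET P)
                   (theory' header psi psi' rpsi rpsi' T) M',
          refines (rename_model M rn) M' &
          exists v : int,
            [/\ is_max (S_IPET ++ S_flow header psi psi' E tr f M) (g_IPET E w f) v,
                is_max (S_IPET ++ S_flow header psi psi' E tr f M') (g_IPET E w f) v &
                is_max (scope M') (g_IPET E w f) v]]].
Proof.
move=> finj Hbase Hvars Hrun HfT HfP HrF Hr'F HrT Hr'T HrP Hr'P rinj r'inj rdis [Mconc [abs Habs] Mcomp].
set FE := [seq f e | e in E].
set A := FE ++ [seq rpsi bb | bb <- enum BB] ++ [seq rpsi' bb | bb <- enum BB & header bb].
set L := sys_vars (scope M) ++ sys_vars (scope P) ++ theory_vars T.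
have [rn [rninv rnfix rnout]] := exists_swap A L.
have notA : forall v, v \notin FE -> (forall bb, rpsi bb != v) ->
    (forall bb, header bb -> rpsi' bb != v) -> v \notin A.
  move=> v h1 h2 h3; rewrite !mem_cat negb_or h1 /= negb_or; apply/andP; split.
  - by apply/mapP => -[bb _ Hb]; move: (h2 bb); rewrite Hb eqxx.
  - apply/mapP => -[bb Hb Hv]; rewrite mem_filter in Hb; case/andP: Hb => hb _.
    by move: (h3 bb hb); rewrite Hv eqxx.
have AnotFE : forall v, v \notin A -> v \notin FE.
  by move=> v; rewrite mem_cat negb_or => /andP[].
have Anotr : forall v bb, v \notin A -> rpsi bb != v.
  move=> v bb; rewrite !mem_cat !negb_or => /and3P[_ H _]; apply/eqP => Hv.
  by move: H; rewrite -Hv map_f // mem_enum.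
have Anotr' : forall v bb, v \notin A -> header bb -> rpsi' bb != v.
  move=> v bb; rewrite !mem_cat !negb_or => /and3P[_ _ H] hb; apply/eqP => Hv.
  by move: H; rewrite -Hv map_f // mem_filter hb mem_enum.
have Tfix : forall x, List.In x T -> rn x.2 = x.2.
  move=> x Hx; have HT := In_theory_vars _ _ Hx; apply: rnfix.
  - by rewrite /L !mem_cat HT !orbT.
  - apply: notA.
    + apply/imageP => -[e He Hv]; by move: (HfT e He); rewrite -Hv HT.
    + by move=> bb; apply/eqP => Hv; move: (HrT bb); rewrite Hv HT.
    + by move=> bb hb; apply/eqP => Hv; move: (Hr'T bb hb); rewrite Hv HT.
have Pfix : forall y, y \in sys_vars (scope P) -> rn y = y.
  move=> y Hy; apply: rnfix.
  - by rewrite /L !mem_cat Hy !orbT.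
  - apply: notA.
    + apply/imageP => -[e He Hv]; by move: (HfP e He); rewrite -Hv Hy.
    + by move=> bb; apply/eqP => Hv; move: (HrP bb); rewrite Hv Hy.
    + by move=> bb hb; apply/eqP => Hv; move: (Hr'P bb hb); rewrite Hv Hy.

have [k0 Hk0] : solvable (scope M) by case: Mconc.
set SF := S_flow header psi psi' E tr f M.
set D := flatten [seq Defs.eqn [:: (1, rpsi bb)] (Defs.count M (psi bb))%:Z | bb <- enum BB]
      ++ flatten [seq Defs.eqn [:: (1, rpsi' bb)] (Defs.count M (psi' bb))%:Z
                 | bb <- enum BB & header bb].
set S' := rename_sys rn (scope M) ++ (S_IPET ++ S_merge header E tr f rpsi rpsi') ++ (SF ++ D).
have outFE : forall bb x, x \in [seq t.2 | t <- out_bb E tr f bb] -> x \in FE.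
  by move=> bb x; apply: esum_vars.
have HFlhs : forall k, sat k SF -> forall bb,
    lhs k (out_bb E tr f bb) = (bb_count header psi psi' M bb)%:Z.
  by move=> k /sat_flatten HF bb; apply/sat_eqn; apply: HF; rewrite mem_enum.
have ext : forall k, sat k (S_IPET ++ SF) -> exists k', sat k' S' /\ {in FE, k' =1 k}.
  move=> k /sat_cat [HI HF].
  pose k' x := if x \in FE then k x else
    if [pick bb | rpsi bb == x] is Some bb then (Defs.count M (psi bb))%:Z else
    if [pick bb | header bb && (rpsi' bb == x)] is Some bb then (Defs.count M (psi' bb))%:Z
    else k0 (rn x).
  have k'FE : {in FE, k' =1 k} by move=> x Hx; rewrite /k' Hx.
  have k'r : forall bb, k' (rpsi bb) = (Defs.count M (psi bb))%:Z.
    move=> bb; rewrite /k' (negbTE (HrF bb)); case: pickP => [bb' /eqP H|H].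
    - by rewrite (rinj _ _ H).
    - by move: (H bb); rewrite eqxx.
  have k'r' : forall bb, header bb -> k' (rpsi' bb) = (Defs.count M (psi' bb))%:Z.
    move=> bb hb; rewrite /k' (negbTE (Hr'F bb hb)); case: pickP => [bb' /eqP H|_].
    - by case: (rdis bb' bb hb).
    case: pickP => [bb' /andP [hb' /eqP H]|H].
    - by rewrite (r'inj bb' bb hb' hb H).
    - by move: (H bb); rewrite hb eqxx.
  have k'out : forall x, x \notin A -> k' x = k0 (rn x).
    move=> x hx; rewrite /k' (negbTE (AnotFE x hx)).
    case: pickP => [bb' H|_]; first by move: (Anotr x bb' hx); rewrite H.
    case: pickP => [bb' /andP [hb H]|_] //; by move: (Anotr' x bb' hx hb); rewrite H.
  have outeq : forall bb, lhs k' (out_bb E tr f bb) = lhs k (out_bb E tr f bb).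
    by move=> bb; apply: lhs_ext => x Hx; apply: k'FE; apply: outFE Hx.
  exists k'; split => //.
  rewrite /S'; apply/sat_cat; split.
    apply/sat_rename; apply: (@sat_ext k0) Hk0 => y Hy /=.
    by rewrite k'out ?rninv // rnout // /L mem_cat Hy.
  apply/sat_cat; split; apply/sat_cat; split.
  - apply: (@sat_ext k) HI => y Hy; rewrite k'FE //; exact: Hvars.
  - apply/sat_flatten => bb _; have := HFlhs k HF bb; rewrite /bb_count.
    case hb: (header bb) => Hc; apply/sat_eqn; rewrite !lhs_cons lhs_neg outeq Hc /=.
    + rewrite k'r k'r' // PoszD; lia.
    + rewrite k'r; lia.
  - apply/sat_flatten => bb _; apply/sat_eqn; rewrite outeq; exact: HFlhs.
  - apply/sat_cat; split; apply/sat_flatten => bb Hb; apply/sat_eqn;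
      rewrite lhs_cons lhs_nil mul1r addr0.
    + exact: k'r.
    + by apply: k'r'; move: Hb; rewrite mem_filter => /andP[].
have nonneg : forall k, sat k S_IPET -> forall e, e \in E -> 0 <= k (f e).
  move=> k HI e He; have Hc : ([:: (-1, f e)], 0) \in S_IPET.
    by apply: Hbase; rewrite /IPET_base !mem_cat map_f ?orbT // mem_enum.
  by have := HI _ Hc; rewrite /sat_ineq /= lhs_cons lhs_nil addr0 mulN1r /= oppr_le0.
set B := \sum_(e in E) (w e)%:Z * (bb_count header psi psi' M (tr e.1))%:Z.
have gB : forall k, sat k (S_IPET ++ SF) -> g_IPET E w f k <= B.
  move=> k /sat_cat [HI HF]; rewrite /g_IPET /B; apply: ler_sum => e He.
  apply: ler_wpM2l => //; rewrite -(HFlhs k HF (tr e.1)).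
  by apply: le_lhs_esum => //; apply: nonneg.
have [m [[k1 [Hk1 Hg1]] Hm]] : exists m,
    (exists k, sat k (S_IPET ++ SF) /\ g_IPET E w f k = m) /\
    forall v, (exists k, sat k (S_IPET ++ SF) /\ g_IPET E w f k = v) -> v <= m.
  apply: (@int_max (fun v => exists k, sat k (S_IPET ++ SF) /\ g_IPET E w f k = v) B
            (g_IPET E w f (k_path E f (run M)))).
  - by exists (k_path E f (run M)); split => //; exact: Hrun.
  - by move=> v [k [Hk <-]]; apply: gB.
have HmaxSF : is_max (S_IPET ++ SF) (g_IPET E w f) m.
  split; first by exists k1.
  by move=> k Hk; apply: Hm; exists k.
have [k' [Hk' Hag]] := ext k1 Hk1.
exists rn; split.
- by exists rn.
- exact: Tfix.
exists (with_scope M S'); split.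
- split.
  + case: Mconc => h1 h2 h3 h4 _; split => //; by exists k'.
  + exists abs; case: Habs => [[h1 h2 h3 h4 h5] Hent]; split; first by split.
    move=> k /sat_cat [Hr /sat_cat [HIM _]]; apply/sat_cat; split => //.
    move/sat_rename: Hr => /Hent HP; apply: (@sat_ext (k \o rn)) HP => y Hy /=.
    by rewrite Pfix.
  + move=> x Hx; case: (List.in_app_or _ _ _ Hx) => [HT|H2].
    * move=> k /sat_cat [Hr _]; move/sat_rename: Hr => /(Mcomp x HT) /sat_eqn.
      rewrite lhs_cons lhs_nil /= Tfix // => Hc; apply/sat_eqn.
      by rewrite lhs_cons lhs_nil /= count_ws.
    * move=> k /sat_cat [_ /sat_cat [_ /sat_cat [_ /sat_cat [HD1 HD2]]]].
      case: (List.in_app_or _ _ _ H2) => /List.in_map_iff [bb [<- Hbb]] /=.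
      - by rewrite count_ws; move/sat_flatten: HD1 => /(_ bb (In_mem _ _ Hbb)).
      - by rewrite count_ws; move/sat_flatten: HD2 => /(_ bb (In_mem _ _ Hbb)).
- exists id; split; first split; try by move=> *; right.
  + by move=> p _; exists p.
  + by move=> k /sat_cat [].
- exists m; split => //; first by rewrite S_flow_ws.
  split.
  + exists k'; split => //; rewrite -Hg1 /g_IPET; apply: eq_bigr => e He.
    by rewrite Hag // image_f.
  + move=> k /sat_cat [_ /sat_cat [/sat_cat [HI _] /sat_cat [HF _]]].
    by apply: Hm; exists k; split => //; apply/sat_cat.
Qed.
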